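(* Let $G$ be an $n\times n$ Game of Primes grid with $n\ge 2$ (defined in the context), and let $c$ be a corner cell of $G$ at least one of whose neighbors contains a prime number. If $c$ is excited on some day $t$, then $c$ is excited on every day $t'\ge t$.
   Context: A Game of Primes (GOPM) grid of dimension $n$ is an $n\times n$ grid whose cells are filled with the $n^2$ natural numbers $a, a+d, a+2d,\dots,a+(n^2-1)d$ (for fixed integers $a\ge 1$, $d\ge 1$) in snake-like (boustrophedon) order: the first row is filled left to right starting with $a$ in the top-left cell, the second row right to left, the third row left to right, and so on. Two distinct cells are neighbors if they are adjacent horizontally, vertically or diagonally (so a corner cell has exactly 3 neighbors). Each cell is in one of two states, excited or dormant; a configuration (''day'') assigns a state to every cell. For a configuration $s$ and a cell $c$, let $N_s(c)$ be the number of neighbors of $c$ that contain a prime number or are excited in $s$ (or both). The update map $F$ sends $s$ to $F(s)$ where: a cell dormant in $s$ becomes excited iff $N_s(c)\ge 3$ (otherwise stays dormant); a cell excited in $s$ becomes dormant iff $N_s(c)\ge 4$ or $N_s(c)=0$ (otherwise stays excited). Day $0$ has all cells dormant, and day $t+1$ is $F$ applied to day $t$. *)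

(* Defs.v *)
From mathcomp Require Import all_boot.
Set Implicit Arguments. Unset Strict Implicit. Unset Printing Implicit Defensive.

(* A cell of the n x n grid: (row i, column j), 0-indexed, row 0 on top. *)
Definition cell (n : nat) := ('I_n * 'I_n)%type.

Definition snake_index (n : nat) (c : cell n) : nat :=
  let i := nat_of_ord c.1 in let j := nat_of_ord c.2 in
  if odd i then i * n + (n.-1 - j) else i * n + j.

Definition gval (n a d : nat) (c : cell n) : nat := a + snake_index c * d.

Definition has_prime (n a d : nat) (c : cell n) : bool := prime (gval a d c).

Definition absdiff (x y : nat) : nat := (x - y) + (y - x).

Definition neighbor (n : nat) (c c' : cell n) : bool :=
  [&& c != c', absdiff c.1 c'.1 <= 1 & absdiff c.2 c'.2 <= 1].

(* A configuration: true = excited, false = dormant. *)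
Definition config (n : nat) := cell n -> bool.

Definition Ncount (n a d : nat) (s : config n) (c : cell n) : nat :=
  #|[pred c' : cell n | neighbor c c' && (has_prime a d c' || s c')]|.

Definition step (n a d : nat) (s : config n) : config n :=
  fun c => let k := Ncount a d s c in
    if s c then ~~ ((4 <= k) || (k == 0)) else 3 <= k.

Definition day (n a d t : nat) : config n :=
  iter t (step a d) (fun _ => false).

Definition is_corner (n : nat) (c : cell n) : bool :=
  ((nat_of_ord c.1 == 0) || (nat_of_ord c.1 == n.-1)) &&
  ((nat_of_ord c.2 == 0) || (nat_of_ord c.2 == n.-1)).

(* Main.v *)
Require Import Defs.
From mathcomp Require Import all_boot.
From mathcomp Require Import zify.

Lemma corner_bound {n} {c : cell n} (hn : 2 <= n) (hc : is_corner c) :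
  #|[pred c' : cell n | neighbor c c']| <= 3.
Proof.
case: c hc => ci cj; rewrite /is_corner /= => hc.
set ci' := if val ci == 0 then 1 else n - 2.
set cj' := if val cj == 0 then 1 else n - 2.
pose L := [:: (val ci, cj'); (ci', val cj); (ci', cj')].
pose f := fun x : cell n => (val x.1, val x.2).
have finj : injective f.
  by move=> [x1 x2] [y1 y2] /= [/val_inj -> /val_inj ->].
rewrite cardE -(size_map f).
apply: (@leq_trans (size L)); last by [].
apply: uniq_leq_size; first by rewrite map_inj_uniq // enum_uniq.
move=> z /mapP [[i j]]; rewrite mem_enum inE => Hx ->.
move: Hx; rewrite /neighbor /absdiff /= xpair_eqE -!val_eqE /=.
move: hc; rewrite /L /f /ci' /cj' !inE !xpair_eqE /=.
have := ltn_ord i; have := ltn_ord j; have := ltn_ord ci; have := ltn_ord cj.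
move: (val i) (val j) (val ci) (val cj) => i0 j0 a b.
case: (a =P 0) => [->|Ha]; case: (b =P 0) => [->|Hb] /=; lia.
Qed.

Lemma stay {n a d} {s : config n} {c : cell n} (hn : 2 <= n) (hc : is_corner c)
  (hp : exists c' : cell n, neighbor c c' && has_prime a d c') :
  s c = true -> step a d s c = true.
Proof.
move=> hs; rewrite /step hs /= /Ncount.
have h3 : #|[pred c0 : cell n | neighbor c c0 && (has_prime a d c0 || s c0)]| <= 3.
  have hb := corner_bound hn hc; apply: leq_trans hb.
  apply: subset_leq_card; apply/subsetP => x; rewrite !inE => /andP[] //.
have h1 : 0 < #|[pred c0 : cell n | neighbor c c0 && (has_prime a d c0 || s c0)]|.
  case: hp => x /andP [hx1 hx2].
  apply/card_gt0P; exists x; by rewrite inE hx1 hx2.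
apply/negP => /orP [h | /eqP h]; first by rewrite ltnNge h3 in h.
by rewrite h in h1.
Qed.

Theorem theorem4p3 (n a d : nat) (hn : 2 <= n) (ha : 1 <= a) (hd : 1 <= d)
    (c : cell n) (hc : is_corner c)
    (hp : exists c' : cell n, neighbor c c' && has_prime a d c')
    (t : nat) (hex : day a d t c = true) :
  forall t' : nat, t <= t' -> day a d t' c = true.
Proof.
move=> t' /subnKC <-; elim: (t' - t) => [|k IH]; first by rewrite addn0.
rewrite addnS /day iterS; exact: stay hn hc hp IH.
Qed.
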